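(* Let $n\ge1$ be an integer and let $k\in\mathbb{R}\setminus C_n$. Then there is a unique pair $(a,b)\in\mathbb{R}^2$ with $(a,b)\neq(0,0)$ satisfying both $S^{(a,b)}_{k,n+1}+S^{(a,b)}_{k,n}=bk+2b+a$ and $4a^3+27b^2=0$; namely $a=-\frac{27(P_n(k)-1)^2}{4(Q_n(k)-k-2)^2}$, $b=\frac{27(P_n(k)-1)^3}{4(Q_n(k)-k-2)^3}$.
   Context: For real $k,a,b$, the generalized $k$-FL sequence is $S^{(a,b)}_{k,0}=2b$, $S^{(a,b)}_{k,1}=bk+a$, $S^{(a,b)}_{k,m}=kS^{(a,b)}_{k,m-1}+S^{(a,b)}_{k,m-2}$ ($m\ge2$). Define $f_m,g_m\in\mathbb{Z}[T]$ by $f_0=0,f_1=1,g_0=2,g_1=T$, $f_m=Tf_{m-1}+f_{m-2}$, $g_m=Tg_{m-1}+g_{m-2}$, and set $P_n=f_{n+1}+f_n$, $Q_n=g_{n+1}+g_n$, so that $S^{(a,b)}_{k,n+1}+S^{(a,b)}_{k,n}=P_n(k)a+Q_n(k)b$. Let $C_n=\{k\in\mathbb{R}: P_n(k)-1=0 \text{ or } Q_n(k)-k-2=0\}$. *)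

(* Defs.v *)
From mathcomp Require Import all_boot all_order all_algebra.
Set Implicit Arguments. Unset Strict Implicit. Unset Printing Implicit Defensive.
Import Order.TTheory GRing.Theory Num.Theory.
Local Open Scope ring_scope.

Fixpoint S_FL (R : pzRingType) (k a b : R) (m : nat) : R :=
  match m with
  | 0%N => 2 * b
  | 1%N => b * k + a
  | (S ((S m'') as m')) => k * S_FL k a b m' + S_FL k a b m''
  end.

Fixpoint fpoly (m : nat) : {poly int} :=
  match m with
  | 0%N => 0
  | 1%N => 1
  | (S ((S m'') as m')) => 'X * fpoly m' + fpoly m''
  end.

Fixpoint gpoly (m : nat) : {poly int} :=
  match m with
  | 0%N => 2%:P
  | 1%N => 'X
  | (S ((S m'') as m')) => 'X * gpoly m' + gpoly m''
  end.

Definition Ppoly (n : nat) : {poly int} := fpoly n.+1 + fpoly n.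
Definition Qpoly (n : nat) : {poly int} := gpoly n.+1 + gpoly n.

Definition evalZ (R : realFieldType) (p : {poly int}) (k : R) : R :=
  (map_poly intr p).[k].

Definition Cn (R : realFieldType) (n : nat) : pred R :=
  fun k => (evalZ (Ppoly n) k - 1 == 0) || (evalZ (Qpoly n) k - k - 2 == 0).

(* Main.v *)
Require Import Defs.
From mathcomp Require Import all_boot all_order all_algebra.
From mathcomp Require Import ring lra.
Import Order.TTheory GRing.Theory Num.Theory.
Local Open Scope ring_scope.

Lemma evalZ_step (R : realFieldType) (p q : {poly int}) (k : R) :
  evalZ ('X * p + q) k = k * evalZ p k + evalZ q k.
Proof. by rewrite /evalZ rmorphD rmorphM /= map_polyX hornerD hornerM hornerX mulrC. Qed.

Lemma S_eval (R : realFieldType) (k a b : R) m :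
  S_FL k a b m = evalZ (fpoly m) k * a + evalZ (gpoly m) k * b /\
  S_FL k a b m.+1 = evalZ (fpoly m.+1) k * a + evalZ (gpoly m.+1) k * b.
Proof.
elim: m => [|m [IH1 IH2]].
  rewrite /evalZ /= !rmorph0 !rmorph1 map_polyC map_polyX /= !hornerC hornerX.
  split; ring.
split=> //.
change (S_FL k a b m.+2) with (k * S_FL k a b m.+1 + S_FL k a b m).
change (fpoly m.+2) with ('X * fpoly m.+1 + fpoly m).
change (gpoly m.+2) with ('X * gpoly m.+1 + gpoly m).
rewrite !evalZ_step IH1 IH2; ring.
Qed.

Theorem lemma3p7 (R : realFieldType) (n : nat) (k : R) :
  (1 <= n)%N -> k \notin Cn (R:=R) n ->
  let cond (ab : R * R) :=
    ab <> (0, 0) /\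
    S_FL k ab.1 ab.2 n.+1 + S_FL k ab.1 ab.2 n = ab.2 * k + 2 * ab.2 + ab.1 /\
    4 * ab.1 ^+ 3 + 27 * ab.2 ^+ 2 = 0 in
  (exists! ab : R * R, cond ab) /\
  cond (- (27 * (evalZ (Ppoly n) k - 1) ^+ 2) / (4 * (evalZ (Qpoly n) k - k - 2) ^+ 2),
        (27 * (evalZ (Ppoly n) k - 1) ^+ 3) / (4 * (evalZ (Qpoly n) k - k - 2) ^+ 3)).
Proof.
move=> _ hC cond.
have hS : forall a b : R, S_FL k a b n.+1 + S_FL k a b n =
   evalZ (Ppoly n) k * a + evalZ (Qpoly n) k * b.
  move=> a b; have [E1 E2] := @S_eval R k a b n.
  rewrite E1 E2 /Ppoly /Qpoly /evalZ !rmorphD !hornerD; ring.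
have /norP [hp hq] : ~~ ((evalZ (Ppoly n) k - 1 == 0) || (evalZ (Qpoly n) k - k - 2 == 0)) := hC.
set P := evalZ (Ppoly n) k in hp hS *.
set Q := evalZ (Qpoly n) k in hq hS *.
set p := P - 1 in hp *.
set q := Q - k - 2 in hq *.
have h4 : (4 : R) != 0 by rewrite pnatr_eq0.
have h27 : (27 : R) != 0 by rewrite pnatr_eq0.
have key : forall ab : R * R, cond ab <->
   ab = (- (27 * p ^+ 2) / (4 * q ^+ 2), (27 * p ^+ 3) / (4 * q ^+ 3)).
  case=> a b; rewrite /cond /= hS; split.
    move=> [nz [e1 e2]].
    have ea : a = - (q * b) / p.
      apply/(mulIf hp); rewrite mulrVK ?unitfE //.
      rewrite /p /q; apply/eqP; rewrite -subr_eq0; apply/eqP.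
      rewrite -[LHS]subr0 -(subrr (P * a + Q * b)) {2}e1; ring.
    have hb : b != 0.
      apply/negP=> /eqP b0; apply: nz; rewrite ea b0; congr pair; ring.
    have eb : b = 27 * p ^+ 3 / (4 * q ^+ 3).
      rewrite ea in e2.
      have : b ^+ 2 * (4 * q ^+ 3 * b - 27 * p ^+ 3) = 0.
        have := congr1 (fun x => x * (- p ^+ 3)) e2; rewrite mul0r => <-.
        field; exact: hp.
      move/eqP; rewrite mulf_eq0 expf_eq0 (negbTE hb) /= subr_eq0 => /eqP E.
      apply/(mulIf (_ : 4 * q ^+ 3 != 0)).
        by rewrite mulf_neq0 // expf_neq0.
      by rewrite mulrC E divfK // mulf_neq0 // expf_neq0.
    rewrite ea eb; congr pair; field; by rewrite hp hq.
  move=> [-> ->]; split; last split.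
  - case=> _ /eqP; rewrite (negbTE (_ : _ != 0)) //; by rewrite mulf_neq0 ?invr_neq0 ?mulf_neq0 ?expf_neq0.
  - apply/eqP; rewrite -subr_eq0; apply/eqP; rewrite /p /q; field.
    done.
  - field; by rewrite hq.
split; last by apply/key.
exists (- (27 * p ^+ 2) / (4 * q ^+ 2), (27 * p ^+ 3) / (4 * q ^+ 3)).
split; first by apply/key.
by move=> ab /key ->.
Qed.
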